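(* Let $W$ be a balanced tetrahedral erasure channel with $Q(W)\le 2$. Then $Q(W^{s})\le 2$ and $Q(W^{p})\le 2$.
   Context: $\mathrm{TEC}(p,q,r,s,t)$ denotes a tetrahedral erasure channel with parameters $p,q,r,s,t\ge0$ summing to $1$. Its entropy is $H=\frac{q+r+s}{2}+t$, its edge mass is $E=q+r+s$, and its Quetelet index is $Q=E/(H(1-H))$ (defined when $0<H<1$). It is balanced if $q=r=s$. For $W=\mathrm{TEC}(p,q,r,s,t)$, the serial child is $W^{s}=\mathrm{TEC}(p^2,\ ps+sq+qp,\ pq+qr+rp,\ pr+rs+sp,\ 1-\text{(sum of the other four)})$ and the parallel child is $W^{p}=\mathrm{TEC}(1-\text{(sum of the other four)},\ ts+sq+qt,\ tq+qr+rt,\ tr+rs+st,\ t^2)$. *)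

(* Defs.v *)
From Stdlib Require Import Reals Lra.
Open Scope R_scope.

Record TEC := mkTEC { tp : R; tq : R; tr : R; ts : R; tt : R }.

Definition valid_TEC (W : TEC) : Prop :=
  0 <= tp W /\ 0 <= tq W /\ 0 <= tr W /\ 0 <= ts W /\ 0 <= tt W /\
  tp W + tq W + tr W + ts W + tt W = 1.

Definition entropy (W : TEC) : R := (tq W + tr W + ts W) / 2 + tt W.
Definition edge_mass (W : TEC) : R := tq W + tr W + ts W.
(* Quetelet index; only meaningful when 0 < entropy W < 1. *)
Definition quetelet (W : TEC) : R :=
  edge_mass W / (entropy W * (1 - entropy W)).

Definition balanced (W : TEC) : Prop := tq W = tr W /\ tr W = ts W.

Definition serial_child (W : TEC) : TEC :=
  let p := tp W in let q := tq W in let r := tr W in let s := ts W in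
  let p' := p ^ 2 in
  let q' := p * s + s * q + q * p in
  let r' := p * q + q * r + r * p in
  let s' := p * r + r * s + s * p in
  mkTEC p' q' r' s' (1 - (p' + q' + r' + s')).

Definition parallel_child (W : TEC) : TEC :=
  let q := tq W in let r := tr W in let s := ts W in let t := tt W in
  let q' := t * s + s * q + q * t in
  let r' := t * q + q * r + r * t in
  let s' := t * r + r * s + s * t in
  let t' := t ^ 2 in
  mkTEC (1 - (q' + r' + s' + t')) q' r' s' t'.

Definition Q_le2 (W : TEC) : Prop :=
  0 < entropy W < 1 /\ quetelet W <= 2.

(* Main.v *)
Require Import Defs.
From Stdlib Require Import Reals Lra Psatz.
Open Scope R_scope.

Lemma coreL (p a t : R) : 0 <= p -> 0 <= a -> 0 <= t -> p + 3*a + t = 1 ->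
  0 < 3*a/2 + t -> 3*a/2 + t < 1 ->
  3*a <= 2*((3*a/2+t)*(1-(3*a/2+t))) ->
  let X := p^2 + 3*(a*(2*p+a))/2 in
  0 < X /\ X < 1 /\ 3*(a*(2*p+a)) <= 2*(X*(1-X)).
Proof.
  intros Hp Ha Ht Hs H0 H1 HQ X.
  set (u := 3*a/2). set (s := p + u).
  assert (HX : X = s*s - u*u/3) by (unfold X, s, u; field).
  assert (Hsu : u <= s*(1-s)).
  { assert (Et : t = 1 - s - u) by (unfold s, u; lra).
    rewrite Et in HQ. replace (u + (1 - s - u)) with (1 - s) in HQ by ring.
    replace (1 - (1 - s)) with s in HQ by ring. unfold u in *. nra. }
  assert (0 < s) by (unfold s, u; lra).
  assert (s < 1) by (unfold s, u; lra).
  assert (0 <= u) by (unfold u; lra).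
  assert (u <= s) by (unfold s; lra).
  assert (0 <= X) by (rewrite HX; nra).
  assert (s*s <= s - u) by nra.
  assert (Hg : 3*(a*(2*p+a)) = 2*(2*u*s - 4*u*u/3)) by (unfold s, u; field).
  repeat split.
  - rewrite HX. destruct (Req_dec u 0) as [->|]; nra.
  - rewrite HX. nra.
  - rewrite Hg. 
    assert (X <= s - u) by (rewrite HX; nra).
    assert (0 <= (s-u-X)*(s-u+X)) by nra.
    assert (X*(1-X) - (2*u*s - 4*u*u/3) = (s-u-X)*(s-u+X)) by (rewrite HX; field).
    lra.
Qed.

Lemma qle (E H : R) : 0 < H < 1 -> E <= 2*(H*(1-H)) -> E / (H*(1-H)) <= 2.
Proof.
  intros [H0 H1] HE.
  assert (0 < H*(1-H)) by nra.
  apply Rmult_le_reg_r with (H*(1-H)); [lra|].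
  unfold Rdiv. rewrite Rmult_assoc, Rinv_l by lra. lra.
Qed.

Theorem mainTheorem9 (W : TEC) :
  valid_TEC W -> balanced W -> Q_le2 W ->
  Q_le2 (serial_child W) /\ Q_le2 (parallel_child W).
Proof.
  destruct W as [p q r s t].
  unfold valid_TEC, balanced, Q_le2, quetelet, entropy, edge_mass; cbn [tp tq tr ts tt].
  intros (Hp & Hq & Hr & Hs & Ht & Hsum) [-> ->] [[H0 H1] HQ].
  assert (HQ' : 3*s <= 2*((3*s/2+t)*(1-(3*s/2+t)))).
  { assert (0 < (3*s/2+t)*(1-(3*s/2+t))) by nra.
    replace ((s+s+s)/2 + t) with (3*s/2+t) in HQ by field.
    replace (s+s+s) with (3*s) in HQ by ring.
    apply Rmult_le_compat_r with (r := (3*s/2+t)*(1-(3*s/2+t))) in HQ; [|lra].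
    unfold Rdiv in HQ. rewrite Rmult_assoc, Rinv_l in HQ by lra. lra. }
  replace ((s+s+s)/2 + t) with (3*s/2+t) in H0, H1 by field.
  split.
  - destruct (coreL p s t Hp Hs Ht ltac:(lra) H0 H1 HQ') as (A & B & C).
    set (X := p^2 + 3*(s*(2*p+s))/2) in *.
    unfold serial_child; cbv zeta; cbn [tp tq tr ts tt].
    replace ((p * s + s * s + s * p + (p * s + s * s + s * p) + (p * s + s * s + s * p)) / 2 +
     (1 - (p ^ 2 + (p * s + s * s + s * p) + (p * s + s * s + s * p) + (p * s + s * s + s * p))))
      with (1 - X) by (unfold X; field).
    split; [split; lra|].
    replace (p * s + s * s + s * p + (p * s + s * s + s * p) + (p * s + s * s + s * p))
      with (3*(s*(2*p+s))) by ring.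
    apply qle; [lra|]. replace (1 - (1-X)) with X by ring. lra.
  - destruct (coreL t s p Ht Hs Hp ltac:(lra) ltac:(lra) ltac:(lra)
       ltac:(replace (3*s/2+p) with (1-(3*s/2+t)) by lra;
             replace (1-(1-(3*s/2+t))) with (3*s/2+t) by ring; lra)) as (A & B & C).
    set (X := t^2 + 3*(s*(2*t+s))/2) in *.
    unfold parallel_child; cbv zeta; cbn [tp tq tr ts tt].
    replace ((t * s + s * s + s * t + (t * s + s * s + s * t) + (t * s + s * s + s * t)) / 2 + t ^ 2)
      with X by (unfold X; field).
    split; [split; lra|].
    replace (t * s + s * s + s * t + (t * s + s * s + s * t) + (t * s + s * s + s * t))
      with (3*(s*(2*t+s))) by ring.
    apply qle; [lra|]. lra.
Qed.
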